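(* Let $R$ be a commutative unital ring and equip $\mathfrak{FdgMod}_R$ with the model structure whose weak equivalences are the maps $f$ with $H^n(F^pf)$ an isomorphism for all $n\in\mathbb Z,p\in\mathbb N$, with generating cofibrations $I=\{S_R(n+1,p)\to D_R(n,p)\}$ and generating trivial cofibrations $J=\{0\to D_R(n,p)\}$. Then a morphism $p:(M,F)\to(N,F)$ is a trivial fibration if and only if, for every $k\in\mathbb N$, $F^kp:F^kM\to F^kN$ is degreewise surjective with acyclic kernel. In particular, $W\cap J\text{-inj}=I\text{-inj}$, where $W$ is the class of weak equivalences, $J$-inj the class of maps having the right lifting property with respect to $J$, and $I$-inj the class of maps having the right lifting property with respect to $I$.
   Context: $\mathfrak{FdgMod}_R$: filtered cochain complexes $(M,F)$ of $R$-modules, i.e. complexes with decreasing filtrations by subcomplexes $F^kM$ ($k\in\mathbb N$, $F^0M=M$), with filtration-preserving cochain maps. $D_R(n)$: $R$ in degrees $n,n+1$ with identity differential; $S_R(n)$: $R$ in degree $n$; $D_R(n,p)$, $S_R(n,p)$: these complexes filtered by $F^k=$ whole complex for $k\le p$ and $0$ for $k>p$; $S_R(n+1,p)\to D_R(n,p)$ the inclusion in degree $n+1$. *)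

(* Defs.v *)
From HB Require Import structures.
From mathcomp Require Import all_boot all_order all_algebra.
Unset Printing Implicit Defensive.
Import Order.TTheory GRing.Theory Num.Theory.
Local Open Scope ring_scope.

Record cpx (R : pzRingType) := Cpx {
  cobj :> int -> lmodType R;
  cd : forall n : int, {linear cobj n -> cobj (n + 1)};
  cdd : forall n (x : cobj n), cd (n + 1) (cd n x) = 0 }.

Record fcpx (R : pzRingType) := FCpx {
  fc :> cpx R;
  fil : nat -> forall n : int, pred (fc n);
  fil0 : forall n (x : fc n), fil 0 n x;
  fil_zero : forall k n, fil k n 0;
  fil_lin : forall k n a (x y : fc n), fil k n x -> fil k n y -> fil k n (a *: x + y);
  fil_d : forall k n (x : fc n), fil k n x -> fil k (n + 1) (@cd R fc n x);
  fil_dec : forall k n (x : fc n), fil k.+1 n x -> fil k n x }.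

Record fmor (R : pzRingType) (M N : fcpx R) := FMor {
  fm : forall n : int, {linear M n -> N n};
  fm_d : forall n (x : M n), fm (n + 1) (@cd R M n x) = @cd R N n (fm n x);
  fm_fil : forall k n (x : M n), @fil R M k n x -> @fil R N k n (fm n x) }.

Arguments cd {R} c n.
Arguments fil {R} f k n.
Arguments fm {R M N} f n.
Arguments fmor {R} M N.

Section Defs.
Variable R : pzRingType.

Definition RLP {A B : fcpx R} (i : fmor A B) {M N : fcpx R} (p : fmor M N) :=
  forall (a : fmor A M) (b : fmor B N),
    (forall n (x : A n), fm p n (fm a n x) = fm b n (fm i n x)) ->
    exists h : fmor B M,
      (forall n (x : A n), fm h n (fm i n x) = fm a n x) /\
      (forall n (x : B n), fm p n (fm h n x) = fm b n x).

(* Weak equivalence: H^m(F^p f) is an isomorphism for all m : int, p : nat.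
   (Cohomology in degree n+1, for all n : int, i.e. in every degree.)
   Injectivity and surjectivity of the induced map on cohomology are written
   out elementwise. *)
Definition weq {M N : fcpx R} (f : fmor M N) :=
  forall (p : nat) (n : int),
    (forall x : M (n + 1), fil M p (n + 1) x -> cd M (n + 1) x = 0 ->
       forall y : N n, fil N p n y -> fm f (n + 1) x = cd N n y ->
       exists z : M n, fil M p n z /\ cd M n z = x) /\
    (forall y : N (n + 1), fil N p (n + 1) y -> cd N (n + 1) y = 0 ->
       exists (x : M (n + 1)) (w : N n),
         [/\ fil M p (n + 1) x, cd M (n + 1) x = 0, fil N p n w &
             y = fm f (n + 1) x + cd N n w]).

Definition surj_acyclic_ker {M N : fcpx R} (f : fmor M N) :=
  forall k : nat,
    (forall n (y : N n), fil N k n y -> exists x : M n, fil M k n x /\ fm f n x = y) /\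
    (forall n (x : M (n + 1)), fil M k (n + 1) x -> fm f (n + 1) x = 0 ->
       cd M (n + 1) x = 0 ->
       exists z : M n, [/\ fil M k n z, fm f n z = 0 & cd M n z = x]).

(* ---- The complexes S_R(n,p), D_R(n,p), 0, built from row vectors:
   degree m carries 'rV[R]_(dim m) (dim m in {0,1}; 'rV_1 ~ R, 'rV_0 = 0),
   and every differential / structure map is right multiplication by the
   all-ones matrix (the identity when both sides are 'rV_1). *)

Lemma mulmx_dim0 a b c (x : 'rV[R]_a) (A : 'M[R]_(a, b)) (B : 'M[R]_(b, c)) :
  (a * b * c == 0)%N -> x *m A *m B = 0.
Proof.
case: a x A => [|a] x A; first by rewrite (thinmx0 x) !mul0mx.
case: b A B => [|b] A B; first by rewrite (thinmx0 A) mulmx0 mul0mx.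
by case: c B => [|c] B; [rewrite thinmx0 | rewrite !muln_eq0].
Qed.

Lemma mulmx_dim0' a c (x : 'rV[R]_a) (A B : 'M[R]_(a, c)) :
  (a * c == 0)%N -> x *m A = x *m B.
Proof.
case: a x A B => [|a] x A B; first by rewrite (thinmx0 x) !mul0mx.
by case: c A B => [|c] A B; [rewrite (thinmx0 (x *m A)) (thinmx0 (x *m B))|
  rewrite muln_eq0].
Qed.

Arguments mulmx_dim0 {a b c}.
Arguments mulmx_dim0' {a c}.

Definition rcpx (dim : int -> nat)
  (H : forall m, (dim m * dim (m + 1)%R * dim (m + 1 + 1)%R == 0)%N) : cpx R :=
  @Cpx R (fun m => 'rV[R]_(dim m))
    (fun m => mulmxr (const_mx 1 : 'M[R]_(dim m, dim (m + 1))))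
    (fun m x => mulmx_dim0 x _ _ (H m)).

Definition rfcpx (dim : int -> nat)
  (H : (forall m, (dim m * dim (m + 1)%R * dim (m + 1 + 1)%R == 0)%N)) (p : nat) : fcpx R.
Proof.
refine (@FCpx R (@rcpx dim H) (fun k m x => (k <= p)%N || (x == 0)) _ _ _ _ _).
- by move=> n x.
- by move=> k n; rewrite eqxx orbT.
- move=> k n a x y; case: (k <= p)%N => //= /eqP -> /eqP ->.
  by rewrite scaler0 addr0.
- move=> k n x /=; case: (k <= p)%N => //= /eqP ->; by rewrite mul0mx.
- move=> k n x /=; case: ltnP => [/ltnW ->//|_ /= ->]; by rewrite orbT.
Defined.

Definition rfmor (dimA : int -> nat) (HA : (forall m, (dimA m * dimA (m + 1)%R * dimA (m + 1 + 1)%R == 0)%N))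
  (dimB : int -> nat) (HB : (forall m, (dimB m * dimB (m + 1)%R * dimB (m + 1 + 1)%R == 0)%N)) (p : nat)
  (Hc : forall m, (dimA m * dimB (m + 1)%R == 0)%N) :
  fmor (@rfcpx dimA HA p) (@rfcpx dimB HB p).
Proof.
refine (@FMor R (@rfcpx dimA HA p) (@rfcpx dimB HB p)
  (fun m => mulmxr (const_mx 1 : 'M[R]_(dimA m, dimB m))) _ _).
- move=> n x /=; rewrite -!mulmxA; exact: mulmx_dim0'.
- move=> k n x /=; case: (k <= p)%N => //= /eqP ->; by rewrite mul0mx.
Defined.

Definition dimS (n : int) (m : int) : nat := (m == n).
Definition dimD (n : int) (m : int) : nat := (m == n) || (m == n + 1).
Definition dim0 (m : int) : nat := 0.

Lemma int1 (n : int) : (n + 1 == n) = false.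
Proof. by rewrite -[X in _ == X]addr0 (inj_eq (addrI n)) oner_eq0. Qed.
Lemma int2 (n : int) : (n + 1 + 1 == n) = false.
Proof. by rewrite -addrA -[X in _ == X]addr0 (inj_eq (addrI n)). Qed.
Lemma int2' (n : int) : (n + 1 + 1 == n + 1) = false.
Proof. by rewrite (inj_eq (addIr 1)) int1. Qed.

Lemma dimS_dd n m : (dimS n m * dimS n (m + 1)%R * dimS n (m + 1 + 1)%R == 0)%N.
Proof. by rewrite /dimS; case: (m =P n) => [->|] //=; rewrite int1. Qed.

Lemma dimD_dd n m : (dimD n m * dimD n (m + 1)%R * dimD n (m + 1 + 1)%R == 0)%N.
Proof.
rewrite /dimD; case: (m =P n) => [->|hm] /=; first by rewrite int2 int2' muln0.
case: (m =P n + 1) => [->|hm'] //=; by rewrite int2 int2' ?int1 /= ?muln0.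
Qed.

Lemma dim0_dd m : (dim0 m * dim0 (m + 1)%R * dim0 (m + 1 + 1)%R == 0)%N.
Proof. by []. Qed.

Definition S_R (n : int) (p : nat) : fcpx R := @rfcpx (dimS n) (dimS_dd n) p.
Definition D_R (n : int) (p : nat) : fcpx R := @rfcpx (dimD n) (dimD_dd n) p.
Definition zero_fcpx : fcpx R := @rfcpx dim0 dim0_dd 0.

Lemma incl_c n m : (dimS (n + 1)%R m * dimD n (m + 1)%R == 0)%N.
Proof. by rewrite /dimS /dimD; case: (m =P n + 1) => [->|] //=; rewrite int2 int2'. Qed.

Definition incl_SD (n : int) (p : nat) : fmor (S_R (n + 1) p) (D_R n p) :=
  @rfmor _ _ _ _ p (incl_c n).

Definition zero_D (n : int) (p : nat) : fmor (@rfcpx dim0 dim0_dd p) (D_R n p) :=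
  @rfmor dim0 dim0_dd (dimD n) (dimD_dd n) p (fun m => eqxx 0%N).

Definition I_inj {M N : fcpx R} (f : fmor M N) :=
  forall (n : int) (p : nat), RLP (incl_SD n p) f.
Definition J_inj {M N : fcpx R} (f : fmor M N) :=
  forall (n : int) (p : nat), RLP (zero_D n p) f.

(* Trivial fibrations of the cofibrantly generated model structure:
   fibrations (= J-inj) that are weak equivalences. *)
Definition trivial_fibration {M N : fcpx R} (f : fmor M N) :=
  weq f /\ J_inj f.

End Defs.

Arguments RLP {R A B} i {M N} p.
Arguments weq {R M N} f.
Arguments surj_acyclic_ker {R M N} f.
Arguments I_inj {R M N} f.
Arguments J_inj {R M N} f.
Arguments trivial_fibration {R M N} f.
Arguments S_R {R} n p.
Arguments D_R {R} n p.
Arguments incl_SD {R} n p.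
Arguments zero_D {R} n p.

(* Main.v *)
From HB Require Import structures.
Require Import Defs.
From mathcomp Require Import all_boot all_order all_algebra.
Set Implicit Arguments. Unset Strict Implicit. Unset Printing Implicit Defensive.
Import Order.TTheory GRing.Theory Num.Theory.
Local Open Scope ring_scope.

Arguments fil_lin {R f k n} a {x y} _ _.
Arguments fil_zero {R} f k n.
Arguments fil_d {R f k n x} _.
Arguments fil_dec {R f k n x} _.
Arguments fm_d {R M N} f n x.
Arguments fm_fil {R M N} f k n x _.
Arguments cdd {R} c n x.

Section Infra.
Variable R : pzRingType.

Definition tot k (v : 'rV[R]_k) : R := \sum_(j < k) v 0 j.

Lemma tot_lin k a (u v : 'rV[R]_k) : tot (a *: u + v) = a * tot u + tot v.
Proof. rewrite /tot mulr_sumr -big_split /=; apply: eq_bigr => j _; by rewrite !mxE. Qed.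

Lemma tot0 k (v : 'rV[R]_k) : (k == 0)%N -> tot v = 0.
Proof. by case: k v => // v _; rewrite /tot big_ord0. Qed.

Lemma tot_const k c : tot (const_mx c : 'rV[R]_k) = c *+ k.
Proof.
rewrite /tot (eq_bigr (fun _ => c)) ?sumr_const ?card_ord // => j _; by rewrite mxE.
Qed.

Lemma tot_mulc k l (v : 'rV[R]_k) : tot (v *m (const_mx 1 : 'M_(k, l))) = tot v *+ l.
Proof.
rewrite /tot (eq_bigr (fun _ => tot v)) ?sumr_const ?card_ord // => j _.
rewrite mxE /tot; apply: eq_bigr => i _; by rewrite mxE mulr1.
Qed.

Lemma rV_tot k (v : 'rV[R]_k) : (k <= 1)%N -> v = tot v *: const_mx 1.
Proof.
case: k v => [|[|k]] v // _.
- by apply/matrixP => i [].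
- apply/rowP => j; rewrite !mxE /tot big_ord1 mulr1 (ord1 j) //.
Qed.

Section Mk.
Variables (X : cpx R) (dim : int -> nat) (e : forall m, X m) (m : int).
Definition mkfun (v : 'rV[R]_(dim m)) : X m := tot v *: e m.
Fact mkfun_lin : linear mkfun.
Proof. move=> a u v; by rewrite /mkfun tot_lin scalerDl scalerA. Qed.
HB.instance Definition _ := GRing.isLinear.Build R 'rV[R]_(dim m) (X m) _ mkfun mkfun_lin.
End Mk.

Lemma shift (P : int -> Prop) : (forall n, P (n + 1)) -> forall n, P n.
Proof. move=> H n; have := H (n - 1); by rewrite subrK. Qed.

Definition pt (X : cpx R) (n : int) (x : X n) (m : int) : X m :=
  match @eqP _ n m with ReflectT h => eq_rect n (fun k => (X k : Type)) x m h | ReflectF _ => 0 end.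

Lemma pt_id (X : cpx R) n (x : X n) : pt x n = x.
Proof. rewrite /pt; case: eqP => [h|[]//]; by rewrite (eq_axiomK h). Qed.

Lemma pt_ne (X : cpx R) n (x : X n) m : n != m -> pt x m = 0.
Proof. rewrite /pt; case: eqP => // h; by rewrite h eqxx. Qed.


Section Fil.
Variable X : fcpx R.
Lemma filZ k n a (x : X n) : fil X k n x -> fil X k n (a *: x).
Proof. move=> h; have := fil_lin a h (fil_zero X k n); by rewrite addr0. Qed.
Lemma filD k n (x y : X n) : fil X k n x -> fil X k n y -> fil X k n (x + y).
Proof. move=> hx hy; have := fil_lin 1 hx hy; by rewrite scale1r. Qed.
Lemma filN k n (x : X n) : fil X k n x -> fil X k n (- x).
Proof. move=> h; have := filZ (-1) h; by rewrite scaleN1r. Qed.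
Lemma filB k n (x y : X n) : fil X k n x -> fil X k n y -> fil X k n (x - y).
Proof. by move=> hx /filN; apply: filD. Qed.
Lemma fil_le k p n (x : X n) : (k <= p)%N -> fil X p n x -> fil X k n x.
Proof.
move=> /subnK <-; elim: (p - k)%N => //= d IH H; apply: IH; apply: fil_dec.
by rewrite -addSn.
Qed.
Lemma pt_fil k n (x : X n) m : fil X k n x -> fil X k m (pt x m).
Proof. rewrite /pt; case: eqP => [h|_]; [by case: m / h | move=> _; exact: fil_zero]. Qed.
End Fil.

Lemma pt_map (X Y : fcpx R) (f : fmor X Y) n (x : X n) m : fm f m (pt x m) = pt (fm f n x) m.
Proof. rewrite /pt; case: eqP => [h|_]; [by case: m / h | exact: linear0]. Qed.

Definition mkmor dim (H : forall m, (dim m * dim (m + 1)%R * dim (m + 1 + 1)%R == 0)%N) p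
  (X : fcpx R) (e : forall m, X m)
  (Hc : forall m, dim m != 0%N -> e (m + 1) *+ dim (m + 1) = cd X m (e m))
  (Hf : forall m, dim m != 0%N -> fil X p m (e m)) : fmor (@rfcpx R dim H p) X.
Proof.
refine (@FMor R (@rfcpx R dim H p) X (fun m => @mkfun X dim e m) _ _).
- move=> m v /=; rewrite /mkfun tot_mulc linearZ /= -scalerMnl scalerMnr.
  have [/eqP h|h] := eqVneq (dim m) 0%N; first by rewrite (tot0 v h) !scale0r.
  by rewrite Hc.
- move=> k m v /= /orP [kp|/eqP ->]; last by rewrite linear0; exact: fil_zero.
  rewrite /mkfun; have [/eqP h|h] := eqVneq (dim m) 0%N.
    by rewrite (tot0 v h) scale0r; exact: fil_zero.
  apply: filZ; exact: (fil_le kp (Hf m h)).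
Defined.

Lemma mkmorE dim H p X e Hc Hf m v : fm (@mkmor dim H p X e Hc Hf) m v = tot v *: e m.
Proof. by []. Qed.

Lemma form_gen dim H p (X : fcpx R) (g : fmor (@rfcpx R dim H p) X)
  (Hd : forall m, (dim m <= 1)%N) m v : fm g m v = tot v *: fm g m (const_mx 1).
Proof. by rewrite {1}(rV_tot v (Hd m)) linearZ. Qed.

Definition ED (X : cpx R) n (y : X n) m : X m := pt y m + pt (cd X n y) m.

Lemma genD n p : cd (@D_R R n p) n (const_mx 1) = const_mx 1.
Proof.
apply/matrixP => i j; rewrite !mxE (eq_bigr (fun _ => 1)) ?sumr_const ?card_ord.
  by rewrite /dimD eqxx.
by move=> k _; rewrite !mxE mulr1.
Qed.

Lemma D_form n p (X : fcpx R) (g : fmor (@D_R R n p) X) m v :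
  fm g m v = tot v *: ED (fm g n (const_mx 1)) m.
Proof.
rewrite form_gen; last by move=> k; rewrite /dimD leq_b1.
have [h|hn] := eqVneq m n.
  by subst m; rewrite /ED pt_id pt_ne ?int1 ?addr0.
have [h|hn'] := eqVneq m (n + 1).
  subst m; rewrite /ED pt_id pt_ne ?add0r; last by rewrite eq_sym int1.
  by rewrite -fm_d genD.
by rewrite tot0 ?scale0r // /dimD (negbTE hn) (negbTE hn').
Qed.

Lemma S_form n p (X : fcpx R) (g : fmor (@S_R R (n + 1) p) X) m v :
  fm g m v = tot v *: pt (fm g (n + 1) (const_mx 1)) m.
Proof.
rewrite form_gen; last by move=> k; rewrite /dimS leq_b1.
have [h|hn] := eqVneq m (n + 1); first by subst m; rewrite pt_id.
by rewrite tot0 ?scale0r // /dimS (negbTE hn).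
Qed.

Lemma S_cycle n p (X : fcpx R) (g : fmor (@S_R R (n + 1) p) X) :
  cd X (n + 1) (fm g (n + 1) (const_mx 1)) = 0.
Proof. by rewrite -fm_d S_form pt_ne ?scaler0 // eq_sym int1. Qed.

Lemma ED_map (X Y : fcpx R) (f : fmor X Y) n (x : X n) m :
  fm f m (ED x m) = ED (fm f n x) m.
Proof. by rewrite /ED linearD !(pt_map f) fm_d. Qed.

Lemma ED_fil (X : fcpx R) k n (x : X n) m : fil X k n x -> fil X k m (ED x m).
Proof. by move=> h; apply: filD; apply: pt_fil => //; apply: fil_d. Qed.

Lemma ED_n (X : cpx R) n (x : X n) : ED x n = x.
Proof. by rewrite /ED pt_id pt_ne ?int1 ?addr0. Qed.

Lemma ED_n1 (X : cpx R) n (x : X n) : ED x (n + 1) = cd X n x.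
Proof. by rewrite /ED pt_id pt_ne ?add0r // eq_sym int1. Qed.

Definition mkD n p (X : fcpx R) (x : X n) (Hx : fil X p n x) : fmor (@D_R R n p) X.
Proof.
refine (@mkmor (dimD n) (dimD_dd n) p X (ED x) _ _).
- move=> m; rewrite /dimD; have [h|hn] := eqVneq m n.
    by subst m; rewrite int1 eqxx /= mulr1n ED_n1 ED_n.
  have [h|hn'] := eqVneq m (n + 1); last by [].
  by subst m; rewrite int2 int2' /= mulr0n ED_n1 cdd.
- by move=> m _; apply: ED_fil.
Defined.

Definition mkS n p (X : fcpx R) (a : X (n + 1)) (Ha : fil X p (n + 1) a)
  (Hc : cd X (n + 1) a = 0) : fmor (@S_R R (n + 1) p) X.
Proof.
refine (@mkmor (dimS (n + 1)) (dimS_dd (n + 1)) p X (pt a) _ _).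
- move=> m; rewrite /dimS; have [h|hn] := eqVneq m (n + 1); last by [].
  by subst m; rewrite int1 /= mulr0n pt_id Hc.
- by move=> m _; apply: pt_fil.
Defined.

Definition zmor p (X : fcpx R) : fmor (@rfcpx R dim0 dim0_dd p) X.
Proof.
refine (@mkmor dim0 dim0_dd p X (fun _ => 0) _ _) => //.
Defined.

Lemma thin0 m (v : 'rV[R]_(dim0 m)) : v = 0.
Proof. by apply/matrixP => i []. Qed.

Lemma tot_gen k : (k == 1)%N -> tot (const_mx 1 : 'rV[R]_k) = 1.
Proof. by rewrite tot_const => /eqP ->. Qed.


Lemma dimD_n1 n : dimD n (n + 1) = 1%N.
Proof. by rewrite /dimD int1 eqxx. Qed.
Lemma dimD_n n : dimD n n = 1%N.
Proof. by rewrite /dimD eqxx. Qed.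
Lemma dimS_n n : dimS n n = 1%N.
Proof. by rewrite /dimS eqxx. Qed.

Lemma mkDE n p (X : fcpx R) (x : X n) (Hx : fil X p n x) m v :
  fm (mkD Hx) m v = tot v *: ED x m.
Proof. by []. Qed.
Lemma mkSE n p (X : fcpx R) (a : X (n + 1)) Ha Hc m v :
  fm (@mkS n p X a Ha Hc) m v = tot v *: pt a m.
Proof. by []. Qed.
Lemma mkD_gen n p (X : fcpx R) (x : X n) (Hx : fil X p n x) :
  fm (mkD Hx) n (const_mx 1) = x.
Proof. by rewrite mkDE tot_gen ?scale1r ?ED_n // /dimD eqxx. Qed.
Lemma inclE n p m v : tot (fm (@incl_SD R n p) m v) = tot v *+ dimD n m.
Proof. exact: tot_mulc. Qed.
Lemma genD_fil n p k : (k <= p)%N -> fil (@D_R R n p) k n (const_mx 1).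
Proof. by move=> h; rewrite /D_R /= h. Qed.
Lemma genS_fil n p k : (k <= p)%N -> fil (@S_R R n p) k n (const_mx 1).
Proof. by move=> h; rewrite /S_R /= h. Qed.

Section Main.
Variables (M N : fcpx R) (f : fmor M N).

Definition surjf := forall k n (y : N n), fil N k n y -> exists x : M n, fil M k n x /\ fm f n x = y.
Definition acycf := forall k n (x : M (n + 1)), fil M k (n + 1) x -> fm f (n + 1) x = 0 ->
       cd M (n + 1) x = 0 ->
       exists z : M n, [/\ fil M k n z, fm f n z = 0 & cd M n z = x].
Definition Ilift := forall n p (m : M (n + 1)) (y : N n), fil M p (n + 1) m -> cd M (n + 1) m = 0 ->
  fil N p n y -> fm f (n + 1) m = cd N n y ->
  exists x : M n, [/\ fil M p n x, cd M n x = m & fm f n x = y].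

Lemma J_surj : J_inj f <-> surjf.
Proof.
split.
- move=> HJ k n y Hy.
  have [|h [_ Hh]] := HJ n k (zmor k M) (mkD Hy).
    by move=> m v; rewrite (thin0 v) !linear0.
  exists (fm h n (const_mx 1)); split; first by apply: fm_fil; apply: genD_fil.
  by rewrite Hh mkD_gen.
- move=> Hs n p a b _.
  have Hy : fil N p n (fm b n (const_mx 1)) by apply: fm_fil; apply: genD_fil.
  have [x [Hx Hfx]] := Hs p n _ Hy.
  exists (mkD Hx); split.
    by move=> m v; rewrite (thin0 v) !linear0.
  by move=> m v; rewrite mkDE [RHS](D_form b) linearZZ ED_map Hfx.
Qed.

Lemma I_lift : I_inj f <-> Ilift.
Proof.
split.
- move=> HI n p m0 y Hm Hc Hy Hf.
  have [|h [H1 H2]] := HI n p (mkS Hm Hc) (mkD Hy); last first.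
    exists (fm h n (const_mx 1)); split.
    + by apply: fm_fil; apply: genD_fil.
    + have := H1 (n + 1) (const_mx 1).
      rewrite mkSE pt_id (D_form h) ED_n1 inclE tot_gen ?scale1r; last by rewrite /dimS eqxx.
      by rewrite dimD_n1 mulr1n scale1r.
    + by have := H2 n (const_mx 1); rewrite mkD_gen.
  move=> k v; rewrite mkSE linearZZ (pt_map f) mkDE inclE.
  have [hk|hk] := eqVneq k (n + 1).
    by subst k; rewrite pt_id ED_n1 Hf dimD_n1 mulr1n.
  by rewrite tot0 ?mul0rn ?scale0r // /dimS (negbTE hk).
- move=> HL n p a b Hab.
  have Ha0 : fil M p (n + 1) (fm a (n + 1) (const_mx 1)) by apply: fm_fil; apply: genS_fil.
  have Hy : fil N p n (fm b n (const_mx 1)) by apply: fm_fil; apply: genD_fil.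
  have Hf : fm f (n + 1) (fm a (n + 1) (const_mx 1)) = cd N n (fm b n (const_mx 1)).
    rewrite Hab (D_form b) ED_n1 inclE tot_gen ?scale1r; last by rewrite /dimS eqxx.
    by rewrite dimD_n1 mulr1n scale1r.
  have [x [Hx Hdx Hfx]] := HL n p _ _ Ha0 (S_cycle a) Hy Hf.
  exists (mkD Hx); split.
  + move=> k v; rewrite mkDE (S_form a) inclE.
    have [hk|hk] := eqVneq k (n + 1).
      by subst k; rewrite pt_id ED_n1 Hdx dimD_n1 mulr1n.
    by rewrite tot0 ?mul0rn ?scale0r // /dimS (negbTE hk).
  + by move=> k v; rewrite mkDE [RHS](D_form b) linearZZ ED_map Hfx.
Qed.

Lemma weq_acyc : weq f -> surjf -> acycf.
Proof.
move=> W S k n x Hx fx0 dx0.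
have [Inj _] := W k n.
have [z [Hz Hdz]] := Inj x Hx dx0 0 (fil_zero N k n) ltac:(by rewrite fx0 linear0).
have L : forall n (z : M n), fil M k n z -> fm f (n + 1) (cd M n z) = 0 ->
    exists z', [/\ fil M k n z', fm f n z' = 0 & cd M n z' = cd M n z].
  apply: shift => n' z0 Hz0 Hf0.
  have Hc : fil N k (n' + 1) (fm f (n' + 1) z0) by apply: fm_fil.
  have Hdc : cd N (n' + 1) (fm f (n' + 1) z0) = 0 by rewrite -fm_d.
  have [_ Sj] := W k n'.
  have [u [w [Hu Hdu Hw Hcu]]] := Sj _ Hc Hdc.
  have [v [Hv Hfv]] := S k n' w Hw.
  exists (z0 - u - cd M n' v); split.
  - by apply: filB; [apply: filB | apply: fil_d].
  - by rewrite !linearB Hcu fm_d Hfv -addrA -opprD subrr.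
  - by rewrite !linearB Hdu cdd !subr0.
have [z' [Hz' Hfz' Hdz']] := L n z Hz ltac:(by rewrite Hdz).
by exists z'; split => //; rewrite Hdz' Hdz.
Qed.

Lemma sak_weq : surjf -> acycf -> weq f.
Proof.
move=> S A p n; split.
- move=> x Hx dx0 y Hy Hfx.
  have [v [Hv Hfv]] := S p n y Hy.
  have [z [Hz Hfz Hdz]] := A p n (x - cd M n v) (filB Hx (fil_d Hv))
    ltac:(by rewrite linearB fm_d Hfv Hfx subrr) ltac:(by rewrite linearB dx0 cdd subrr).
  exists (z + v); split; [exact: filD | by rewrite linearD Hdz subrK].
- move=> y Hy dy0.
  have [x [Hx Hfx]] := S p (n + 1) y Hy.
  have [z [Hz Hfz Hdz]] := A p (n + 1) (cd M (n + 1) x) (fil_d Hx)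
    ltac:(by rewrite fm_d Hfx dy0) ltac:(by rewrite cdd).
  exists (x - z), 0; split.
  + exact: filB.
  + by rewrite linearB Hdz subrr.
  + exact: fil_zero.
  + by rewrite linear0 addr0 linearB Hfz subr0 Hfx.
Qed.

Lemma sak_ilift : surjf -> acycf -> Ilift.
Proof.
move=> S A n p m0 y Hm Hc Hy Hf.
have [v [Hv Hfv]] := S p n y Hy.
have [z [Hz Hfz Hdz]] := A p n (m0 - cd M n v) (filB Hm (fil_d Hv))
  ltac:(by rewrite linearB fm_d Hfv Hf subrr) ltac:(by rewrite linearB Hc cdd subrr).
exists (z + v); split; [exact: filD | by rewrite linearD Hdz subrK | by rewrite linearD Hfz add0r].
Qed.

Lemma ilift_sak : Ilift -> surjf /\ acycf.
Proof.
move=> L; split.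
- move=> k n y Hy.
  have [x' [Hx' Hdx' Hfx']] := L (n + 1) k 0 (cd N n y) (fil_zero M k _)
    ltac:(by rewrite linear0) (fil_d Hy) ltac:(by rewrite linear0 cdd).
  have [x [Hx _ Hfx]] := L n k x' y Hx' Hdx' Hy ltac:(by rewrite Hfx').
  by exists x.
- move=> k n x Hx fx0 dx0.
  have [z [Hz Hdz Hfz]] := L n k x 0 Hx dx0 (fil_zero N k n) ltac:(by rewrite fx0 linear0).
  by exists z.
Qed.
End Main.

End Infra.

Theorem proposition1p20 (R : comPzRingType) (M N : fcpx R) (f : fmor M N) :
  (trivial_fibration f <-> surj_acyclic_ker f) /\
  (weq f /\ J_inj f <-> I_inj f).
Proof.
have E : surj_acyclic_ker f <-> surjf f /\ acycf f.
  split; first by move=> H; split=> k; [exact: (H k).1 | exact: (H k).2].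
  by move=> [S A] k; split; [exact: S | exact: A].
have T : weq f /\ J_inj f <-> surjf f /\ acycf f.
  split; first by move=> [W /J_surj S]; split => //; exact: weq_acyc.
  by move=> [S A]; split; [exact: sak_weq | exact/J_surj].
have := I_lift f; have := @ilift_sak _ _ _ f; have := @sak_ilift _ _ _ f.
rewrite /trivial_fibration; tauto.
Qed.
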